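(* Let $(V,\cdot,\psi)$ be a Hom-left-symmetric algebra. Then $(V,\psi,L)$ is a weakly involutive representation of the commutator Hom-Lie algebra $(\mathfrak g(V),[\cdot,\cdot]_V,\psi)$ if and only if $u\cdot v=\psi^2(u)\cdot v$ for all $u,v\in V$. Under this condition, $\psi^2$ is an $\mathcal O$-operator of $(\mathfrak g(V),[\cdot,\cdot]_V,\psi)$ associated to $(V,\psi,L)$.
   Context: A Hom-left-symmetric algebra $(V,\cdot,\psi)$: a vector space with bilinear product $\cdot$ and linear map $\psi$ with $\psi(u\cdot v)=\psi(u)\cdot\psi(v)$ and $(u\cdot v)\cdot\psi(w)-\psi(u)\cdot(v\cdot w)=(v\cdot u)\cdot\psi(w)-\psi(v)\cdot(u\cdot w)$. The commutator Hom-Lie algebra $\mathfrak g(V)$ is $V$ with $[u,v]_V=u\cdot v-v\cdot u$ and twisting map $\psi$; $L_uv=u\cdot v$, and $(V,\psi,L)$ is a representation of $\mathfrak g(V)$. A representation $(W,\beta,\rho)$ of a Hom-Lie algebra $(\mathfrak g,[\cdot,\cdot],\phi)$ ($\rho(\phi(x))\beta=\beta\rho(x)$, $\rho([x,y])\beta=\rho(\phi(x))\rho(y)-\rho(\phi(y))\rho(x)$) is weakly involutive if $\rho(\phi^2(x))=\rho(x)$. An $\mathcal O$-operator associated to $(W,\beta,\rho)$ is a linear $T:W\to\mathfrak g$ with $T\beta=\phi T$ and $[T(u),T(v)]=T(\rho(T(u))v-\rho(T(v))u)$. *)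

(* Defs.v *)
From HB Require Import structures.
From mathcomp Require Import all_boot all_algebra.
Set Implicit Arguments. Unset Strict Implicit. Unset Printing Implicit Defensive.
Import GRing.Theory.
Local Open Scope ring_scope.

Definition is_lin (K : fieldType) (V W : lmodType K) (f : V -> W) : Prop :=
  forall (a : K) (x y : V), f (a *: x + y) = a *: f x + f y.

Definition is_bilin (K : fieldType) (V W U : lmodType K) (f : V -> W -> U) : Prop :=
  (forall w, is_lin (fun v => f v w)) /\ (forall v, is_lin (f v)).

Definition HomLeftSymmetric (K : fieldType) (V : lmodType K)
  (mul : V -> V -> V) (psi : V -> V) : Prop :=
  [/\ is_bilin mul, is_lin psi,
      (forall u v, psi (mul u v) = mul (psi u) (psi v)) &
      (forall u v w,
         mul (mul u v) (psi w) - mul (psi u) (mul v w)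
         = mul (mul v u) (psi w) - mul (psi v) (mul u w))].

Definition commutator (K : fieldType) (V : lmodType K) (mul : V -> V -> V) :
  V -> V -> V := fun u v => mul u v - mul v u.

Definition Lmul (K : fieldType) (V : lmodType K) (mul : V -> V -> V) :
  V -> V -> V := fun u v => mul u v.

Definition HomLieRep (K : fieldType) (g W : lmodType K)
  (br : g -> g -> g) (phi : g -> g) (beta : W -> W) (rho : g -> W -> W) : Prop :=
  [/\ is_lin beta,
      (forall (a : K) x y w, rho (a *: x + y) w = a *: rho x w + rho y w), (forall x, is_lin (rho x)),
      (forall x w, rho (phi x) (beta w) = beta (rho x w)) &
      (forall x y w, rho (br x y) (beta w)
                     = rho (phi x) (rho y w) - rho (phi y) (rho x w))].

Definition weakly_involutive (K : fieldType) (g W : lmodType K)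
  (phi : g -> g) (rho : g -> W -> W) : Prop :=
  forall x w, rho (phi (phi x)) w = rho x w.

Definition O_operator (K : fieldType) (g W : lmodType K)
  (br : g -> g -> g) (phi : g -> g) (beta : W -> W) (rho : g -> W -> W)
  (T : W -> g) : Prop :=
  [/\ is_lin T, (forall w, T (beta w) = phi (T w)) &
      (forall u v, br (T u) (T v) = T (rho (T u) v - rho (T v) u))].

(* Main.v *)
Require Import Defs.
From mathcomp Require Import all_boot all_algebra.
Local Open Scope ring_scope.
Import GRing.Theory.

Lemma lin0 (K : fieldType) (V W : lmodType K) (f : V -> W) : is_lin f -> f 0 = 0.
Proof.
move=> H; have := H 1 0 0; rewrite !scale1r addr0 => E.
by apply: (addrI (f 0)); rewrite addr0 -E.
Qed.

Arguments lin0 {K V W f}.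

Lemma linB (K : fieldType) (V W : lmodType K) (f : V -> W) x y :
  is_lin f -> f (x - y) = f x - f y.
Proof.
move=> H; have := H 1 x (- y); rewrite !scale1r => ->.
have := H (-1) y 0; rewrite addr0 (lin0 H) addr0 !scaleN1r => <-.
done.
Qed.

Arguments linB {K V W f} x y.

Theorem corollary5p6 (K : fieldType) (V : lmodType K)
  (mul : V -> V -> V) (psi : V -> V) :
  HomLeftSymmetric mul psi ->
  ((HomLieRep (commutator mul) psi psi (Lmul mul)
    /\ weakly_involutive psi (Lmul mul))
   <-> (forall u v : V, mul u v = mul (psi (psi u)) v))
  /\ ((forall u v : V, mul u v = mul (psi (psi u)) v) ->
      O_operator (commutator mul) psi psi (Lmul mul) (fun u => psi (psi u))).
Proof.
case=> [[Hl Hr] Hpsi Hm Hs]; split; first split.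
- by case=> _ W u v; rewrite /weakly_involutive /Lmul in W; rewrite W.
- move=> P; split; last by move=> x w; rewrite /Lmul -P.
  split => //.
  + by move=> a x y w; rewrite /Lmul; apply: Hl.
  + move=> x y w; rewrite /Lmul /commutator (linB _ _ (Hl _)).
    have /eqP := Hs x y w; rewrite subr_eq => /eqP ->.
    apply/eqP; rewrite subr_eq addrC [_ - _ + mul (mul y x) _]addrC addrCA.
    by [].
- move=> P; split.
  + by move=> a x y; rewrite Hpsi Hpsi.
  + by [].
  + move=> u v; rewrite /commutator /Lmul -(P u v) -(P v u) (linB _ _ Hpsi) (linB _ _ Hpsi).
    by rewrite (Hm u v) (Hm v u) (Hm (psi u)) (Hm (psi v)).
Qed.
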